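(* If $\mathcal{O}$ contains only Scott-open modalities, then for $R\subseteq X\times Y$: (1) if $R$ is reflexive (so $X=Y$), then for all $t,r\in TX$, $t\le r$ implies $t\,\mathcal{O}(R)\,r$; (2) for any ascending sequences $u_0\le u_1\le\dots$ in $TX$ and $v_0\le v_1\le\dots$ in $TY$, if $u_n\,\mathcal{O}(R)\,v_n$ for all $n$, then $(\bigsqcup_n u_n)\,\mathcal{O}(R)\,(\bigsqcup_n v_n)$.
   Context: $\Sigma$ is a signature of effect operations with arities $\alpha^n\to\alpha$, $\mathbf{N}\times\alpha^n\to\alpha$, $\alpha^{\mathbf{N}}\to\alpha$ or $\mathbf{N}\times\alpha^{\mathbf{N}}\to\alpha$. $TX$ is the set of possibly infinite labelled trees with leaves $\bot$ or elements of $X$ and internal nodes labelled by operations (or $\sigma_m$, $m\in\mathbb{N}$) with children according to arity; $t\le t'$ iff $t$ is obtained from $t'$ by replacing (possibly infinitely many) subtrees with $\bot$-leaves; this is an $\omega$-complete partial order with suprema $\bigsqcup$. $\mathbf{1}=\{*\}$. A set $\mathcal{O}$ of modalities is given with $[\![o]\!]\subseteq T\mathbf{1}$; $o$ is Scott-open if $[\![o]\!]$ is upward closed under $\le$ and whenever $t_1\le t_2\le\dots$ has $\bigsqcup_i t_i\in[\![o]\!]$, some $t_n\in[\![o]\!]$. $t[\in P]\in T\mathbf{1}$ replaces leaves in $P$ by $*$ and other $X$-leaves by $\bot$; $o(A)=\{t\in TX\mid t[\in A]\in[\![o]\!]\}$. $R[A]=\{y\mid\exists x\in A,\ xRy\}$;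 $\mathcal{O}$-relator: $t\,\mathcal{O}(R)\,t'$ iff $\forall A\subseteq X\ \forall o\in\mathcal{O}$, $t\in o(A)\Rightarrow t'\in o(R[A])$. *)

(* Defs.v *)
(* Possibly infinite labelled trees TX over a signature,
   represented as partial labelling functions on addresses (lists of child
   indices). *)
From Stdlib Require Import List Arith ClassicalEpsilon.
Import ListNotations.
Set Implicit Arguments.

Section Trees.
(* Node labels L (operations, possibly together with their N-parameter, and
   the sigma_m nodes); [ar l = Some n] : n children (indices 0..n-1),
   [ar l = None] : countably many children (indices in N). *)
Variable L : Type.
Variable ar : L -> option nat.

Inductive label (X : Type) : Type :=
| LBot : label X
| LLeaf : X -> label X
| LNode : L -> label X.
Arguments LBot {X}.

Definition child_ok (l : L) (i : nat) : Prop :=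
  match ar l with Some n => i < n | None => True end.

Definition wf_tree (X : Type) (t : list nat -> option (label X)) : Prop :=
  t [] <> None /\
  forall p i, t (p ++ [i]) <> None <->
              exists l, t p = Some (LNode X l) /\ child_ok l i.

Record tree (X : Type) := mkTree {
  tfun :> list nat -> option (label X);
  twf : wf_tree tfun }.

(* t <= t' : t is obtained from t' by replacing subtrees with bottom leaves *)
Definition tle (X : Type) (t t' : tree X) : Prop :=
  forall p, t p = None \/ t p = t' p \/ (t p = Some LBot /\ t' p <> None).

Definition ascending (X : Type) (u : nat -> tree X) : Prop :=
  forall n, tle (u n) (u (S n)).

Definition is_sup (X : Type) (u : nat -> tree X) (s : tree X) : Prop :=
  (forall n, tle (u n) s) /\
  (forall b, (forall n, tle (u n) b) -> tle s b).

Definition scott_open (O : tree unit -> Prop) : Prop :=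
  (forall t t', tle t t' -> O t -> O t') /\
  (forall (u : nat -> tree unit) s, ascending u -> is_sup u s -> O s ->
     exists n, O (u n)).

Definition restrict_fun (X : Type) (P : X -> Prop)
  (t : list nat -> option (label X)) : list nat -> option (label unit) :=
  fun p => match t p with
           | None => None
           | Some LBot => Some LBot
           | Some (LLeaf x) =>
               if excluded_middle_informative (P x)
               then Some (LLeaf tt) else Some LBot
           | Some (LNode _ l) => Some (LNode unit l)
           end.

Lemma restrict_wf (X : Type) (P : X -> Prop) (t : tree X) :
  wf_tree (restrict_fun P t).
Proof.
  destruct t as [t [Hr Hc]]; unfold restrict_fun; simpl; split.
  - destruct (t []) as [[| x |]|]; [discriminate|
      destruct (excluded_middle_informative (P x)); discriminate|
      discriminate| contradiction].
  - intros p i; specialize (Hc p i); split.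
    + intro H.
      assert (H' : t (p ++ [i]) <> None)
        by (destruct (t (p ++ [i])); [discriminate|exfalso; apply H; reflexivity]).
      apply Hc in H'; destruct H' as [l [E C]]; exists l; rewrite E; auto.
    + intros [l [E C]].
      assert (E' : t p = Some (LNode X l)).
      { destruct (t p) as [[| x |]|]; try discriminate.
        - destruct (excluded_middle_informative (P x)); discriminate.
        - injection E as ->; reflexivity. }
      assert (H' : t (p ++ [i]) <> None) by (apply Hc; eauto).
      destruct (t (p ++ [i])) as [[| x |]|]; try discriminate.
      * destruct (excluded_middle_informative (P x)); discriminate.
      * contradiction.
Qed.

Definition restrict (X : Type) (P : X -> Prop) (t : tree X) : tree unit :=
  mkTree (restrict_wf P t).

Definition modal (X : Type) (O : tree unit -> Prop) (A : X -> Prop) (t : tree X)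
  : Prop := O (restrict A t).

Definition rimage (X Y : Type) (R : X -> Y -> Prop) (A : X -> Prop) : Y -> Prop :=
  fun y => exists x, A x /\ R x y.

(* the O-relator; the set of modalities is a type Mod with [[.]] = sem *)
Definition Orel (Mod : Type) (sem : Mod -> tree unit -> Prop)
  (X Y : Type) (R : X -> Y -> Prop) (t : tree X) (t' : tree Y) : Prop :=
  forall (A : X -> Prop) (o : Mod),
    modal (sem o) A t -> modal (sem o) (rimage R A) t'.

End Trees.

(* Main.v *)
Require Import Defs.
From Stdlib Require Import List Arith ClassicalEpsilon.
Import ListNotations.
Set Implicit Arguments.

Lemma restrict_mono (L : Type) (ar : L -> option nat) (X : Type)
  (A B : X -> Prop) (t r : tree ar X) :
  (forall x, A x -> B x) -> tle t r -> tle (restrict A t) (restrict B r).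
Proof.
  intros HAB H p; specialize (H p); simpl; unfold restrict_fun.
  destruct H as [H|[H|[H1 H2]]].
  - rewrite H; auto.
  - rewrite H. destruct (tfun r p) as [[|x|l]|]; auto.
    destruct (excluded_middle_informative (A x)) as [a|a];
    destruct (excluded_middle_informative (B x)) as [b|b];
    first [ now exfalso; auto | now auto | right; right; split; [reflexivity|discriminate] ].
  - rewrite H1. right; right; split; [reflexivity|].
    destruct (tfun r p) as [[|x|l]|]; try discriminate.
    + destruct (excluded_middle_informative (B x)); discriminate.
    + contradiction.
Qed.

Lemma restrict_eq (L : Type) (ar : L -> option nat) (X : Type)
  (A : X -> Prop) (t r : tree ar X) p :
  tfun t p = tfun r p -> tfun (restrict A t) p = tfun (restrict A r) p.
Proof. intro H; simpl; unfold restrict_fun; rewrite H; reflexivity. Qed.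

Lemma persist (L : Type) (ar : L -> option nat) (X : Type)
  (u : nat -> tree ar X) p m l :
  ascending u -> tfun (u m) p = Some l -> l <> LBot L X ->
  forall k, m <= k -> tfun (u k) p = Some l.
Proof.
  intros Ha Hm Hl k Hk; induction Hk; auto.
  destruct (Ha m0 p) as [H|[H|[H1 H2]]]; congruence.
Qed.

Lemma persist_def (L : Type) (ar : L -> option nat) (X : Type)
  (u : nat -> tree ar X) p m :
  ascending u -> tfun (u m) p <> None ->
  forall k, m <= k -> tfun (u k) p <> None.
Proof.
  intros Ha Hm k Hk; induction Hk; auto.
  destruct (Ha m0 p) as [H|[H|[H1 H2]]]; congruence.
Qed.

Arguments persist {L ar X u p m l} _ _ _ k _.
Arguments persist_def {L ar X u p m} _ _ k _.

Definition Sfun (L : Type) (ar : L -> option nat) (X : Type)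
  (u : nat -> tree ar X) (p : list nat) : option (label L X) :=
  match excluded_middle_informative
          (exists n, exists l, tfun (u n) p = Some l /\ l <> LBot L X) with
  | left H => tfun (u (proj1_sig (constructive_indefinite_description _ H))) p
  | right _ =>
      match excluded_middle_informative (exists n, tfun (u n) p = Some (LBot L X)) with
      | left _ => Some (LBot L X)
      | right _ => None
      end
  end.

Arguments Sfun {L ar X} u p.

Lemma S_nonbot (L : Type) (ar : L -> option nat) (X : Type)
  (u : nat -> tree ar X) p n l :
  ascending u -> tfun (u n) p = Some l -> l <> LBot L X -> Sfun u p = Some l.
Proof.
  intros Ha Hn Hl; unfold Sfun.
  destruct (excluded_middle_informative _) as [H|H].
  - destruct (constructive_indefinite_description _ H) as [m [l' [E1 E2]]]; simpl.
    rewrite E1.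
    assert (A1 := persist Ha Hn Hl _ (Nat.le_max_l n m)).
    assert (A2 := persist Ha E1 E2 _ (Nat.le_max_r n m)).
    congruence.
  - exfalso; apply H; eauto.
Qed.

Arguments S_nonbot {L ar X u p n l} _ _ _.

Lemma S_ex (L : Type) (ar : L -> option nat) (X : Type)
  (u : nat -> tree ar X) p l :
  Sfun u p = Some l -> exists n, tfun (u n) p = Some l.
Proof.
  unfold Sfun. destruct (excluded_middle_informative _) as [H|H].
  - eauto.
  - destruct (excluded_middle_informative _) as [[n E]|H']; [|discriminate].
    intro E'; injection E' as <-; eauto.
Qed.

Arguments S_ex {L ar X u p l} _.

Lemma S_def (L : Type) (ar : L -> option nat) (X : Type)
  (u : nat -> tree ar X) p n :
  ascending u -> tfun (u n) p <> None -> Sfun u p <> None.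
Proof.
  intros Ha Hn.
  destruct (tfun (u n) p) as [l|] eqn:E; [|congruence].
  destruct l as [|x|l].
  - unfold Sfun. destruct (excluded_middle_informative _) as [H|H].
    + destruct (constructive_indefinite_description _ H) as [m [l' [E1 E2]]]; simpl.
      congruence.
    + destruct (excluded_middle_informative _) as [_|H']; [discriminate|].
      exfalso; eauto.
  - rewrite (S_nonbot Ha E); discriminate.
  - rewrite (S_nonbot Ha E); discriminate.
Qed.

Arguments S_def {L ar X u p n} _ _.

Lemma S_wf (L : Type) (ar : L -> option nat) (X : Type)
  (u : nat -> tree ar X) : ascending u -> wf_tree ar (Sfun u).
Proof.
  intro Ha; split.
  - apply (S_def (n:=0) Ha). apply (twf (u 0)).
  - intros p i; split.
    + intro H. destruct (Sfun u (p ++ [i])) as [l|] eqn:E; [|congruence].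
      destruct (S_ex E) as [n En].
      assert (Hn : tfun (u n) (p ++ [i]) <> None) by congruence.
      apply (proj2 (twf (u n))) in Hn. destruct Hn as [l' [E1 E2]].
      exists l'; split; auto. apply (S_nonbot Ha E1); discriminate.
    + intros [l [E C]]. destruct (S_ex E) as [n En].
      apply (S_def (n:=n) Ha). apply (proj2 (twf (u n))). eauto.
Qed.

Definition Stree (L : Type) (ar : L -> option nat) (X : Type)
  (u : nat -> tree ar X) (Ha : ascending u) : tree ar X := mkTree (S_wf Ha).

Arguments Stree {L ar X u} Ha.

Lemma S_ub (L : Type) (ar : L -> option nat) (X : Type)
  (u : nat -> tree ar X) (Ha : ascending u) n : tle (u n) (Stree Ha).
Proof.
  intro p; simpl.
  destruct (tfun (u n) p) as [l|] eqn:E; auto.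
  destruct l as [|x|l].
  - right; right; split; auto. apply (S_def (n:=n) Ha); congruence.
  - right; left; symmetry; apply (S_nonbot Ha E); discriminate.
  - right; left; symmetry; apply (S_nonbot Ha E); discriminate.
Qed.

Lemma sup_char (L : Type) (ar : L -> option nat) (X : Type)
  (u : nat -> tree ar X) (su : tree ar X) :
  ascending u -> is_sup u su ->
  forall p, tfun su p = None \/ exists n, tfun (u n) p = tfun su p.
Proof.
  intros Ha [Hub Hl] p.
  assert (H := Hl (Stree Ha) (S_ub Ha) p); simpl in H.
  destruct H as [H|[H|[H1 H2]]]; auto.
  - destruct (Sfun u p) as [l|] eqn:E; auto.
    destruct (S_ex E) as [n En]; right; exists n; congruence.
  - destruct (Sfun u p) as [l|] eqn:E; [|congruence].
    destruct (S_ex E) as [n En]. right; exists n.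
    destruct l as [|x|l]; [congruence| |];
    destruct (Hub n p) as [K|[K|[K1 K2]]]; congruence.
Qed.

Lemma restrict_sup (L : Type) (ar : L -> option nat) (X : Type)
  (A : X -> Prop) (u : nat -> tree ar X) (su : tree ar X) :
  ascending u -> is_sup u su ->
  ascending (fun n => restrict A (u n)) /\
  is_sup (fun n => restrict A (u n)) (restrict A su).
Proof.
  intros Ha Hs; split; [|split].
  - intro n; apply restrict_mono; auto.
  - intro n; apply restrict_mono; auto. apply (proj1 Hs).
  - intros b Hb p.
    destruct (sup_char Ha Hs p) as [H|[n H]].
    + left; simpl; unfold restrict_fun; rewrite H; reflexivity.
    + rewrite <- (restrict_eq A _ _ _ H). apply (Hb n p).
Qed.

Unset Implicit Arguments.

Theorem lemma5p9 (L : Type) (ar : L -> option nat)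
  (Mod : Type) (sem : Mod -> tree ar unit -> Prop)
  (Hopen : forall o : Mod, scott_open (sem o)) :
  (forall (X : Type) (R : X -> X -> Prop),
     (forall x, R x x) ->
     forall t r : tree ar X, tle t r -> Orel sem R t r) /\
  (forall (X Y : Type) (R : X -> Y -> Prop)
          (u : nat -> tree ar X) (v : nat -> tree ar Y)
          (su : tree ar X) (sv : tree ar Y),
     ascending u -> ascending v -> is_sup u su -> is_sup v sv ->
     (forall n, Orel sem R (u n) (v n)) -> Orel sem R su sv).
Proof.
  split.
  - intros X R Hr t r Htr A o H. unfold modal in *.
    apply (proj1 (Hopen o) (restrict A t)); auto.
    apply restrict_mono; auto. intros x a; exists x; auto.
  - intros X Y R u v su sv Hu Hv Hsu Hsv Hn A o H. unfold modal in *.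
    destruct (restrict_sup A Hu Hsu) as [Ha Hs].
    destruct (proj2 (Hopen o) _ _ Ha Hs H) as [n Hn'].
    apply Hn in Hn'. unfold modal in Hn'.
    apply (proj1 (Hopen o) _ _ (restrict_mono _ _ (fun x h => h) (proj1 Hsv n))).
    exact Hn'.
Qed.
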